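(* Let $F\in Sh^{s,0}_{\Lambda_L}(X)\cap Mod(X)$ be given by data $(V,\rho,W_s,\rho_s,T_s)_{1\le s\le r}$, and let $V_0\subset V$ be as in the context. Set $\rho_0=\rho|_{V_0}$, $W_{0s}=W_s\cap V_0$ (viewing $W_s\subset V$ via $T_s$), $\rho_{0s}=\rho_s|_{W_{0s}}$ and $T_{0s}=T_s|_{W_{0s}}:W_{0s}\to V_0$. Then these are well-defined data of the same type: $V_0$ is $\pi_L$-invariant, $W_{0s}$ is invariant under the monodromy $\rho_s$, the meridian of $K_s$ acts as the identity on $T_{0s}(W_{0s})$, and $\rho_0(\ell_s)\circ T_{0s}=T_{0s}\circ\rho_{0s}(K_s)$. Hence they define a sheaf $F_0$ (the once stabilized subsheaf), and $F_0$ is a subsheaf of $F$.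
   Context: $X=\mathbb{R}^3$ or $S^3$, $k$ a field, $L=K_1\sqcup\dots\sqcup K_r\subset X$ an oriented link with framing $L'=\ell_1\sqcup\dots\sqcup\ell_r$, $\pi_L=\pi_1(X\setminus L)$. $Sh^{s,0}_{\Lambda_L}(X)\cap Mod(X)$: sheaves of $k$-vector spaces on $X$ with micro-support at infinity in the unit conormal $\Lambda_L$, microlocally simple along $\Lambda_L$ with microlocal Morse cone in degree $0$. Such a sheaf is equivalent to data: a representation $\rho:\pi_L\to GL(V)$ (the local system $F|_{X\setminus L}$); for each $s$ a representation $\rho_s:\mathbb{Z}=\pi_1(K_s)\to GL(W_s)$ (the local system $F|_{K_s}$); and a linear map $T_s:W_s\to V$ (restriction from a stalk on $K_s$ to a nearby stalk in the complement), injective with one-dimensional cokernel, such that (a) $\rho(\ell_s)\circ T_s=T_s\circ\rho_s(K_s)$, where $\ell_s$ is the longitude (framing) loop and $K_s$ the generator, and (b) the meridian $m_s$ of $K_s$ acts as the identity on $\mathrm{im}\,T_s$; conversely such data (satisfying (a),(b)) define a sheaf with micro-support in $\Lambda_L$. $V_0:=\sum_{t}\mathrm{im}(\mathrm{id}_V-\rho(m_t))$, the sum over a generating set of $\pi_L$ consisting of meridians (independent of the choice). *)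

(* Defs.v *)
From HB Require Import structures.
From mathcomp Require Import all_boot all_order all_algebra.
Set Implicit Arguments. Unset Strict Implicit. Unset Printing Implicit Defensive.
Import Order.TTheory GRing.Theory Num.Theory.
Local Open Scope ring_scope.

(* The group pi_L is modelled by an abstract (possibly infinite) group [G]. *)

Definition generates (G : groupType) (n : nat) (gens : 'I_n -> G) : Prop :=
  forall P : G -> Prop,
    P 1%g ->
    (forall x y, P x -> P y -> P (x * y)%g) ->
    (forall x, P x -> P (x^-1)%g) ->
    (forall i, P (gens i)) ->
    forall g, P g.

(* [rho] is a representation G -> GL(V) (invertibility follows from the
   group law). *)
Definition is_rep (k : fieldType) (G : groupType) (V : lmodType k)
    (rho : G -> {linear V -> V}) : Prop :=
  (forall v, rho 1%g v = v) /\
  (forall g h v, rho (g * h)%g v = rho g (rho h v)).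

Definition is_int_rep (k : fieldType) (W : lmodType k)
    (rhos : int -> {linear W -> W}) : Prop :=
  (forall w, rhos 0%Z w = w) /\
  (forall a b w, rhos (a + b)%R w = rhos a (rhos b w)).

Definition inj_codim1 (k : fieldType) (W V : lmodType k)
    (T : {linear W -> V}) : Prop :=
  injective T /\
  exists v0 : V, (forall w, T w <> v0) /\
    (forall v, exists (w : W) (a : k), v = T w + a *: v0).

(* V_0 = sum over the meridian generators mer_t of im(id_V - rho(mer_t)). *)
Definition inV0 (k : fieldType) (G : groupType) (V : lmodType k)
    (rho : G -> {linear V -> V}) (n : nat) (mer : 'I_n -> G) (v : V) : Prop :=
  exists c : 'I_n -> V, v = \sum_(t < n) (c t - rho (mer t) (c t)).

(* Main.v *)
Require Import Defs.
From HB Require Import structures.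
From mathcomp Require Import all_boot all_order all_algebra.
Import Order.TTheory GRing.Theory Num.Theory.
Local Open Scope ring_scope.

Section Helpers.
Variables (k : fieldType) (G : groupType) (V : lmodType k)
  (rho : G -> {linear V -> V}) (n : nat) (mer : 'I_n -> G).

Lemma inV0_0 : inV0 rho mer 0.
Proof.
exists (fun _ => 0); rewrite big1 // => t _; by rewrite linear0 subr0.
Qed.

Lemma inV0_add u v : inV0 rho mer u -> inV0 rho mer v -> inV0 rho mer (u + v).
Proof.
move=> [c1 ->] [c2 ->]; exists (fun t => c1 t + c2 t).
rewrite -big_split /=; apply: eq_bigr => t _; rewrite linearD /=.
by rewrite opprD addrACA.
Qed.

Lemma inV0_opp u : inV0 rho mer u -> inV0 rho mer (- u).
Proof.
move=> [c ->]; exists (fun t => - c t).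
rewrite -sumrN; apply: eq_bigr => t _; by rewrite linearN /= opprB opprK addrC.
Qed.

Lemma inV0_gen i v : inV0 rho mer (v - rho (mer i) v).
Proof.
exists (fun t => if t == i then v else 0).
rewrite (bigD1 i) //= eqxx big1 ?addr0 // => t /negbTE ->.
by rewrite linear0 subr0.
Qed.

End Helpers.

Theorem proposition3p12
  (k : fieldType) (G : groupType) (r : nat)
  (* meridian m_s and longitude (framing) l_s of K_s, as elements of pi_L *)
  (m l : 'I_r -> G)
  (* a generating set of pi_L consisting of meridians *)
  (n : nat) (mer : 'I_n -> G)
  (Hgen : generates mer)
  (Hmer : forall t, exists (s : 'I_r) (h : G), mer t = (h^-1 * m s * h)%g)
  (* the data (V, rho, W_s, rho_s, T_s) of F *)
  (V : lmodType k) (rho : G -> {linear V -> V})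
  (W : 'I_r -> lmodType k) (rhos : forall s, int -> {linear W s -> W s})
  (T : forall s, {linear W s -> V})
  (Hrho : is_rep rho)
  (Hrhos : forall s, is_int_rep (rhos s))
  (HT : forall s, inj_codim1 (T s))
  (Ha : forall s w, rho (l s) (T s w) = T s (rhos s 1%Z w))
  (Hb : forall s w, rho (m s) (T s w) = T s w) :
  (* V_0 is pi_L-invariant *)
  (forall g v, inV0 rho mer v -> inV0 rho mer (rho g v)) /\
  (* W_0s = T_s^{-1}(V_0) is invariant under the monodromy rho_s *)
  (forall s (a : int) w, inV0 rho mer (T s w) -> inV0 rho mer (T s (rhos s a w))) /\
  (* T_0s : W_0s -> V_0 is injective *)
  (forall s w1 w2, inV0 rho mer (T s w1) -> inV0 rho mer (T s w2) ->
       T s w1 = T s w2 -> w1 = w2) /\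
  (* the meridian of K_s acts as the identity on T_0s(W_0s) *)
  (forall s w, inV0 rho mer (T s w) -> rho (m s) (T s w) = T s w) /\
  (* rho_0(l_s) o T_0s = T_0s o rho_0s(K_s) *)
  (forall s w, inV0 rho mer (T s w) -> rho (l s) (T s w) = T s (rhos s 1%Z w)).
Proof.
have [rho1 rhoM] := Hrho.
have key : forall g v, inV0 rho mer (v - rho g v).
  move=> g; pattern g; apply: Hgen.
  - by move=> v; rewrite rho1 subrr; apply: inV0_0.
  - move=> x y Px Py v.
    have -> : v - rho (x * y)%g v = (v - rho y v) + (rho y v - rho x (rho y v)).
      by rewrite rhoM addrA subrK.
    by apply: inV0_add.
  - move=> x Px v.
    have -> : v - rho x^-1%g v = - (rho x^-1%g v - rho x (rho x^-1%g v)).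
      by rewrite -rhoM mulgV rho1 opprB.
    by apply: inV0_opp.
  - by move=> i v; apply: inV0_gen.
have inv : forall g v, inV0 rho mer v -> inV0 rho mer (rho g v).
  move=> g v Hv.
  have -> : rho g v = v + - (v - rho g v) by rewrite opprB addrC subrK.
  by apply: inV0_add => //; apply: inV0_opp.
split => //.
split; last first.
  split; first by move=> s w1 w2 _ _; have [Hi _] := HT s; apply: Hi.
  by split => s w _; [apply: Hb | apply: Ha].
move=> s a.
have [rs0 rsD] := Hrhos s.
have Hm1 : forall w, T s (rhos s (-1) w) = rho (l s)^-1%g (T s w).
  move=> w.
  by rewrite -[LHS]rho1 -(mulVg (l s)) rhoM Ha -(rsD 1 (-1)) addrN rs0.
elim/int_rec: a.
- by move=> w; rewrite rs0.
- move=> m0 IH w Hw.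
  have -> : (m0.+1 : int) = (1 : int) + (m0 : int) by rewrite -addn1 PoszD addrC.
  by rewrite rsD -Ha; apply: inv; apply: IH.
- move=> m0 IH w Hw.
  have -> : (- (m0.+1 : int)) = -1 + - (m0 : int).
    by rewrite -addn1 PoszD opprD addrC.
  by rewrite rsD Hm1; apply: inv; apply: IH.
Qed.
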